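(* Let $K$ be a connected simplicial complex, let $E$ be the set of edges of a spanning tree of $K$, and let $p$ be a vertex of $K$. Then $\mathcal{G}(K)\cong \mathrm{F}(E)*\pi_1(K,p)$, where $\mathrm{F}(E)$ is the free group on $E$. In particular $\pi_1(K,p)$ is a doubly free factor of $\mathcal{G}(K)$.
   Context: A simplicial complex $K$ is a collection of nonempty finite subsets (simplices) of a vertex set such that every singleton is a simplex and nonempty subsets of simplices are simplices. The floating homotopy group $\mathcal{G}(K)$ is the group presented by generators $[x,y]$ for all vertices $x,y$ with $\{x,y\}$ a simplex (including $x=y$), and relations $[x,z]=[x,y]\cdot[y,z]$ whenever $\{x,y,z\}$ is a simplex (vertices not necessarily distinct). $\pi_1(K,p)$ is the edge-path fundamental group of $K$ at $p$. A group $G$ is a doubly free factor of $H$ if $H\cong F*G$ for some free group $F$, $*$ denoting free product. *)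

(* Defs.v *)
From Stdlib Require Import List Relations.
Import ListNotations.
Set Implicit Arguments.

Section Complexes.
Variable V : Type.

(* A simplicial complex on the vertex set V: a simplex is the (finite, nonempty)
   set of entries of a list; [S l] means "the set of entries of l is a simplex".
   Lists with the same entries denote the same simplex (follows from (3)). *)
Definition is_complex (S : list V -> Prop) : Prop :=
  (forall l, S l -> l <> []) /\
  (forall x : V, S [x]) /\
  (forall l l', S l -> l' <> [] -> incl l' l -> S l').

Definition edge (S : list V -> Prop) (x y : V) : Prop := S [x; y].

Fixpoint chain (R : V -> V -> Prop) (x : V) (l : list V) : Prop :=
  match l with
  | [] => True
  | y :: l' => R x y /\ chain R y l'
  end.

Lemma last_cons (y x : V) (l : list V) : last (y :: l) x = last l y.
Proof.
  revert y x; induction l as [|z l IH]; intros y x; [reflexivity|].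
  change (last (z :: l) x = last (z :: l) y).
  rewrite (IH z x). symmetry. apply IH.
Qed.

Lemma chain_app (R : V -> V -> Prop) x l1 l2 :
  chain R x (l1 ++ l2) <-> chain R x l1 /\ chain R (last l1 x) l2.
Proof.
  revert x; induction l1 as [|y l1 IH]; intros x.
  - simpl; tauto.
  - cbn [app chain]. rewrite IH, last_cons. tauto.
Qed.

Lemma last_app_gen (l1 l2 : list V) (x : V) :
  last (l1 ++ l2) x = last l2 (last l1 x).
Proof.
  revert x; induction l1 as [|y l1 IH]; intros x; [reflexivity|].
  change ((y :: l1) ++ l2) with (y :: (l1 ++ l2)).
  rewrite !last_cons. apply IH.
Qed.

Definition connected (S : list V -> Prop) : Prop :=
  forall x y : V, exists l, chain (edge S) x l /\ last l x = y.

Definition spanning_tree (S : list V -> Prop) (T : V -> V -> Prop) : Prop :=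
  (forall x y, T x y -> x <> y /\ edge S x y) /\
  (forall x y, T x y -> T y x) /\
  (forall x y : V, exists l, chain T x l /\ last l x = y) /\
  ~ (exists x l, NoDup (x :: l) /\ 2 <= length l /\ chain T x l /\ T (last l x) x).

End Complexes.

Record grp := Grp {
  car :> Type;
  geq : car -> car -> Prop;
  gmul : car -> car -> car;
  gone : car }.

Definition is_group (G : grp) : Prop :=
  (forall x, geq G x x) /\
  (forall x y, geq G x y -> geq G y x) /\
  (forall x y z, geq G x y -> geq G y z -> geq G x z) /\
  (forall x x' y y', geq G x x' -> geq G y y' -> geq G (gmul G x y) (gmul G x' y')) /\
  (forall x y z, geq G (gmul G (gmul G x y) z) (gmul G x (gmul G y z))) /\
  (forall x, geq G (gmul G (gone G) x) x) /\
  (forall x, geq G (gmul G x (gone G)) x) /\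
  (forall x, exists y, geq G (gmul G x y) (gone G) /\ geq G (gmul G y x) (gone G)).

Definition is_hom (G H : grp) (h : G -> H) : Prop :=
  (forall x y, geq G x y -> geq H (h x) (h y)) /\
  (forall x y, geq H (h (gmul G x y)) (gmul H (h x) (h y))) /\
  geq H (h (gone G)) (gone H).

(* letters: (false,(x,y)) is the generator [x,y], (true,(x,y)) its inverse *)
Definition fword (V : Type) := list (bool * (V * V)).

Inductive fl_eqv (V : Type) (S : list V -> Prop) : fword V -> fword V -> Prop :=
| fe_refl w : fl_eqv S w w
| fe_sym w w' : fl_eqv S w w' -> fl_eqv S w' w
| fe_trans w1 w2 w3 : fl_eqv S w1 w2 -> fl_eqv S w2 w3 -> fl_eqv S w1 w3
| fe_app a b c d : fl_eqv S a b -> fl_eqv S c d -> fl_eqv S (a ++ c) (b ++ d)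
| fe_cancel (b : bool) g : fl_eqv S [(b, g); (negb b, g)] []
| fe_rel x y z : S [x; y; z] ->
    fl_eqv S [(false, (x, z))] [(false, (x, y)); (false, (y, z))].

Definition fvalid (V : Type) (S : list V -> Prop) (w : fword V) : Prop :=
  Forall (fun a => edge S (fst (snd a)) (snd (snd a))) w.

Definition fl_car (V : Type) (S : list V -> Prop) := {w : fword V | fvalid S w}.

Definition fl_mul (V : Type) (S : list V -> Prop) (a b : fl_car S) : fl_car S.
Proof.
  exists (proj1_sig a ++ proj1_sig b). unfold fvalid.
  apply Forall_app; split; [exact (proj2_sig a) | exact (proj2_sig b)].
Defined.

Definition fl_one (V : Type) (S : list V -> Prop) : fl_car S :=
  exist _ [] (Forall_nil _).

Definition floating_group (V : Type) (S : list V -> Prop) : grp :=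
  {| car := fl_car S;
     geq := fun a b => fl_eqv S (proj1_sig a) (proj1_sig b);
     gmul := @fl_mul V S;
     gone := fl_one S |}.

(* An edge loop at p is the vertex sequence p :: l (consecutive vertices span
   simplices) with last vertex p; we store l. *)
Definition loop_car (V : Type) (S : list V -> Prop) (p : V) :=
  {l : list V | chain (edge S) p l /\ last l p = p}.

Inductive pstep (V : Type) (S : list V -> Prop) : list V -> list V -> Prop :=
| ps_contract a b u v w : S [u; v; w] ->
    pstep S (a ++ [u; v; w] ++ b) (a ++ [u; w] ++ b).

Definition loop_eqv (V : Type) (S : list V -> Prop) (p : V) (l1 l2 : list V) : Prop :=
  clos_refl_sym_trans (list V) (pstep S) (p :: l1) (p :: l2).

Definition loop_mul (V : Type) (S : list V -> Prop) (p : V)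
  (a b : loop_car S p) : loop_car S p.
Proof.
  exists (proj1_sig a ++ proj1_sig b).
  destruct a as [l1 [H1 E1]], b as [l2 [H2 E2]]; simpl.
  split.
  - apply chain_app. rewrite E1. split; assumption.
  - rewrite last_app_gen, E1. exact E2.
Defined.

Definition loop_one (V : Type) (S : list V -> Prop) (p : V) : loop_car S p :=
  exist _ [] (conj I eq_refl).

Definition edge_path_group (V : Type) (S : list V -> Prop) (p : V) : grp :=
  {| car := loop_car S p;
     geq := fun a b => loop_eqv S p (proj1_sig a) (proj1_sig b);
     gmul := @loop_mul V S p;
     gone := loop_one S p |}.

(* E = the set of (unordered) edges of the symmetric relation T; a map out of E
   is encoded as a function f on ordered pairs with f x y = f y x on edges.
   G ≅ F(E) * H is expressed by the defining (coproduct) universal property: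
   there are a map a : E -> G and a homomorphism j : H -> G such that for every
   group X, every map f : E -> X and every homomorphism g : H -> X there is a
   unique homomorphism h : G -> X with h o a = f and h o j = g. *)
Definition is_free_prod_on_edges (V : Type) (T : V -> V -> Prop) (G H : grp) : Prop :=
  exists (a : V -> V -> G) (j : H -> G),
    (forall x y, T x y -> geq G (a x y) (a y x)) /\ is_hom H G j /\
    forall X : grp, is_group X ->
    forall (f : V -> V -> X) (g : H -> X),
      (forall x y, T x y -> geq X (f x y) (f y x)) -> is_hom H X g ->
      (exists h : G -> X, is_hom G X h /\
         (forall x y, T x y -> geq X (h (a x y)) (f x y)) /\
         (forall z, geq X (h (j z)) (g z))) /\
      (forall h1 h2 : G -> X, is_hom G X h1 -> is_hom G X h2 ->
         (forall x y, T x y -> geq X (h1 (a x y)) (f x y)) ->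
         (forall z, geq X (h1 (j z)) (g z)) ->
         (forall x y, T x y -> geq X (h2 (a x y)) (f x y)) ->
         (forall z, geq X (h2 (j z)) (g z)) ->
         forall w, geq X (h1 w) (h2 w)).

(* Main.v *)
Require Import Defs.
From Stdlib Require Import List Relations ClassicalEpsilon Classical FunctionalExtensionality PropExtensionality ProofIrrelevance Setoid Morphisms Lia.
Import ListNotations.
Set Implicit Arguments.

Class IsGroup (X : grp) : Prop := { isgrp : is_group X }.

#[export] Instance geq_Equiv (X : grp) {HX : IsGroup X} : Equivalence (geq X).
Proof. destruct (@isgrp _ HX) as (r & s & t & _). split; red; eauto. Qed.

#[export] Instance gmul_Proper (X : grp) {HX : IsGroup X} : Proper (geq X ==> geq X ==> geq X) (gmul X).
Proof. destruct (@isgrp _ HX) as (r & s & t & m & _). intros a b H c d H'. auto. Qed.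

Definition ginv (X : grp) (x : X) : X :=
  epsilon (inhabits (gone X)) (fun y => geq X (gmul X x y) (gone X) /\ geq X (gmul X y x) (gone X)).

Section GL.
Context (X : grp) {HX : IsGroup X}.
Local Notation "a * b" := (gmul X a b).
Local Notation "a == b" := (geq X a b) (at level 70).
Local Notation "1" := (gone X).

Lemma mulA (a b c : X) : (a * b) * c == a * (b * c).
Proof. destruct (@isgrp _ HX) as (_&_&_&_&A&_). apply A. Qed.
Lemma mul1l (a : X) : 1 * a == a.
Proof. destruct (@isgrp _ HX) as (_&_&_&_&_&A&_). apply A. Qed.
Lemma mul1r (a : X) : a * 1 == a.
Proof. destruct (@isgrp _ HX) as (_&_&_&_&_&_&A&_). apply A. Qed.
Lemma ginv_spec (a : X) : a * ginv X a == 1 /\ ginv X a * a == 1.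
Proof. destruct (@isgrp _ HX) as (_&_&_&_&_&_&_&A). unfold ginv. apply epsilon_spec. apply A. Qed.
Lemma mulV (a : X) : a * ginv X a == 1.
Proof. apply ginv_spec. Qed.
Lemma Vmul (a : X) : ginv X a * a == 1.
Proof. apply ginv_spec. Qed.
Lemma mulKV (a b : X) : a * (ginv X a * b) == b.
Proof. rewrite <- mulA, mulV, mul1l. reflexivity. Qed.
Lemma mulVK (a b : X) : ginv X a * (a * b) == b.
Proof. rewrite <- mulA, Vmul, mul1l. reflexivity. Qed.
Lemma cancel_l (a b c : X) : a * b == a * c -> b == c.
Proof. intros H. rewrite <- (mulVK a b), H, mulVK. reflexivity. Qed.
Lemma inv_uniq (a b : X) : a * b == 1 -> b == ginv X a.
Proof. intros H. apply (cancel_l a). rewrite H, mulV. reflexivity. Qed.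
#[export] Instance ginv_Proper : Proper (geq X ==> geq X) (ginv X).
Proof. intros a b H. apply inv_uniq. rewrite <- H. apply mulV. Qed.
Lemma inv1 : ginv X 1 == 1.
Proof. symmetry. apply inv_uniq. apply mul1l. Qed.
Lemma idem1 (a : X) : a * a == a -> a == 1.
Proof. intros H. apply (cancel_l a). rewrite H, mul1r. reflexivity. Qed.
Lemma invK (a : X) : ginv X (ginv X a) == a.
Proof. symmetry. apply inv_uniq. apply Vmul. Qed.
Lemma eq_of_mulV (a b : X) : a * ginv X b == 1 -> a == b.
Proof. intros H. rewrite <- (mul1r a), <- (Vmul b), <- mulA, H, mul1l. reflexivity. Qed.
End GL.

Lemma app_assoc_rev A (l m n : list A) : (l ++ m) ++ n = l ++ m ++ n.
Proof. rewrite app_assoc. reflexivity. Qed.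

Fixpoint pth (V : Type) (R : V -> V -> Prop) (s : list V) : Prop :=
  match s with
  | a :: ((b :: _) as t) => R a b /\ pth R t
  | _ => True
  end.

Lemma pth_chain V (R : V -> V -> Prop) x l : pth R (x :: l) <-> chain R x l.
Proof.
  revert x; induction l as [|y l IH]; intros x; simpl; [tauto|].
  rewrite <- IH. simpl. tauto.
Qed.

Lemma pth_app V (R : V -> V -> Prop) s1 z s2 :
  pth R (s1 ++ z :: s2) <-> pth R (s1 ++ [z]) /\ pth R (z :: s2).
Proof.
  induction s1 as [|a s1 IH]; simpl.
  - tauto.
  - destruct s1 as [|b s1]; simpl in *.
    + destruct s2; simpl; tauto.
    + rewrite IH. tauto.
Qed.

Lemma pth_cons V (R : V -> V -> Prop) a s : pth R (a :: s) -> pth R s.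
Proof. destruct s; simpl; tauto. Qed.

Lemma pth_rev V (R : V -> V -> Prop) (Hs : forall x y, R x y -> R y x) s :
  pth R s -> pth R (rev s).
Proof.
  induction s as [|a s IH]; simpl; auto.
  intros H. destruct s as [|b s]; simpl; auto.
  destruct H as [H1 H2]. simpl in IH. specialize (IH H2).
  rewrite <- app_assoc. simpl. apply pth_app. split; auto. simpl; auto.
Qed.

Fixpoint prodS (V : Type) (X : grp) (psi : V -> V -> X) (s : list V) : X :=
  match s with
  | a :: ((b :: _) as t) => gmul X (psi a b) (prodS X psi t)
  | _ => gone X
  end.
Arguments prodS {V X} psi s.

Section PS.
Context (V : Type) (X : grp) (HX : IsGroup X) (psi : V -> V -> X).
Let mA := @mulA X HX. Let m1l := @mul1l X HX. Let m1r := @mul1r X HX.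

Lemma prodS_app s1 z s2 :
  geq X (prodS psi (s1 ++ z :: s2)) (gmul X (prodS psi (s1 ++ [z])) (prodS psi (z :: s2))).
Proof.
  induction s1 as [|a s1 IH]; simpl.
  - rewrite m1l. reflexivity.
  - destruct s1 as [|b s1]; simpl in *.
    + rewrite m1r. reflexivity.
    + rewrite IH, mA. reflexivity.
Qed.

Lemma not_NoDup_split (l : list V) : ~ NoDup l ->
  exists A z B C, l = A ++ z :: B ++ z :: C.
Proof.
  induction l as [|a l IH]; intros H.
  - exfalso; apply H; constructor.
  - destruct (classic (In a l)) as [Hi|Hi].
    + destruct (in_split _ _ Hi) as (B & C & E). exists [], a, B, C. subst; reflexivity.
    + destruct IH as (A & z & B & C & E).
      * intros Hn. apply H. constructor; auto.
      * exists (a :: A), z, B, C. subst; reflexivity.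
Qed.

Lemma closed_walk_trivial (T : V -> V -> Prop)
  (Hirr : forall x, ~ T x x)
  (Hcyc : ~ (exists x l, NoDup (x :: l) /\ 2 <= length l /\ chain T x l /\ T (last l x) x))
  (Hinv : forall u v, T u v -> geq X (gmul X (psi u v) (psi v u)) (gone X)) :
  forall n s x, length s <= n -> pth T (x :: s ++ [x]) -> geq X (prodS psi (x :: s ++ [x])) (gone X).
Proof.
  induction n as [|n IHn]; intros s x Hlen Hp.
  - destruct s; simpl in Hlen; [|lia]. simpl in Hp. exfalso; apply (Hirr x); tauto.
  - destruct (classic (NoDup (x :: s))) as [Hnd|Hnd].
    + destruct s as [|y s].
      * simpl in Hp. exfalso; apply (Hirr x); tauto.
      * destruct s as [|y' s].
        -- simpl in *. rewrite m1r. apply Hinv. tauto.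
        -- exfalso. apply Hcyc. exists x, (y :: y' :: s). split; [exact Hnd|].
           split; [simpl; lia|].
           change (x :: (y :: y' :: s) ++ [x]) with ((x :: y :: y' :: s) ++ [x]) in Hp.
           destruct (exists_last (l := x :: y :: y' :: s)) as (s0 & w & E); [discriminate|].
           rewrite E in Hp. rewrite app_assoc_rev in Hp. simpl in Hp.
           apply pth_app in Hp. destruct Hp as [Hp1 Hp2]. simpl in Hp2.
           split.
           ++ apply pth_chain. rewrite E. exact Hp1.
           ++ assert (Hw : last (x :: y :: y' :: s) x = w) by (rewrite E; apply last_last).
              rewrite last_cons in Hw.
              rewrite Hw. tauto.
    + apply not_NoDup_split in Hnd. destruct Hnd as (A & z & B & C & E).
      assert (E2 : x :: s ++ [x] = A ++ z :: B ++ z :: (C ++ [x])).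
      { change (x :: s ++ [x]) with ((x :: s) ++ [x]). rewrite E.
        rewrite <- !app_assoc. simpl. rewrite <- !app_assoc. reflexivity. }
      rewrite E2 in Hp |- *.
      assert (Hp' := Hp). apply pth_app in Hp. destruct Hp as [HpA HpB].
      rewrite app_comm_cons in HpB. apply pth_app in HpB. destruct HpB as [HpB HpC].
      rewrite prodS_app.
      rewrite app_comm_cons. rewrite (prodS_app (z :: B)).
      rewrite (IHn B z).
      2:{ assert (length (x :: s) = length (A ++ z :: B ++ z :: C)) by (rewrite E; reflexivity).
          rewrite !length_app in H. simpl in H. rewrite length_app in H. simpl in H. lia. }
      2:{ exact HpB. }
      rewrite m1l, <- prodS_app.
      destruct A as [|a A].
      * simpl in E. injection E as E1 E2'. subst z s.
        simpl app. apply IHn.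
        -- rewrite length_app in Hlen. simpl in Hlen. lia.
        -- exact HpC.
      * simpl in E. injection E as E1 E2'. subst a s.
        replace ((x :: A) ++ z :: C ++ [x]) with (x :: (A ++ z :: C) ++ [x])
          by (simpl; rewrite <- app_assoc; reflexivity).
        apply IHn.
        -- rewrite !length_app in Hlen |- *. simpl in *. rewrite length_app in Hlen. simpl in Hlen. lia.
        -- replace (x :: (A ++ z :: C) ++ [x]) with ((x :: A) ++ z :: C ++ [x])
             by (simpl; rewrite <- app_assoc; reflexivity).
           apply pth_app. split; [exact HpA| exact HpC].
Qed.
End PS.

Lemma last_pre V (x : V) l : exists pre, x :: l = pre ++ [last l x].
Proof.
  destruct (exists_last (l := x :: l)) as (pre & w & E); [discriminate|].
  exists pre. rewrite E. f_equal. f_equal.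
  assert (H : last (x :: l) x = w) by (rewrite E; apply last_last).
  rewrite last_cons in H. auto.
Qed.

Lemma tl_app A (l1 l2 : list A) : l1 <> [] -> tl (l1 ++ l2) = tl l1 ++ l2.
Proof. destruct l1; [congruence|reflexivity]. Qed.

Section Cx.
Context (V : Type) (S : list V -> Prop) (HK : is_complex S).

Definition crst := clos_refl_sym_trans (list V) (pstep S).

Lemma Ssub l l' : S l -> incl l' l -> l' <> [] -> S l'.
Proof. intros H1 H2 H3. destruct HK as (_ & _ & H). eapply H; eauto. Qed.

Lemma edge_sym x y : edge S x y -> edge S y x.
Proof. unfold edge; intros H. apply (Ssub H); [intros z Hz; simpl in *; tauto|discriminate]. Qed.

Lemma S_aba x y : edge S x y -> S [x; y; x].
Proof. unfold edge; intros H. apply (Ssub H); [intros z Hz; simpl in *; tauto|discriminate]. Qed.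

Lemma S_aab x y : edge S x y -> S [x; x; y].
Proof. unfold edge; intros H. apply (Ssub H); [intros z Hz; simpl in *; tauto|discriminate]. Qed.

Lemma S_refl x : edge S x x.
Proof. destruct HK as (_ & H1 & _). unfold edge. apply (Ssub (H1 x)); [intros z Hz; simpl in *; tauto|discriminate]. Qed.

Lemma S_xy_of_xyz x y z : S [x; y; z] -> edge S x y.
Proof. unfold edge; intros H. apply (Ssub H); [intros w Hw; simpl in *; tauto|discriminate]. Qed.
Lemma S_yz_of_xyz x y z : S [x; y; z] -> edge S y z.
Proof. unfold edge; intros H. apply (Ssub H); [intros w Hw; simpl in *; tauto|discriminate]. Qed.
Lemma S_xz_of_xyz x y z : S [x; y; z] -> edge S x z.
Proof. unfold edge; intros H. apply (Ssub H); [intros w Hw; simpl in *; tauto|discriminate]. Qed.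

Lemma step a u v w b : S [u; v; w] -> crst (a ++ u :: v :: w :: b) (a ++ u :: w :: b).
Proof. intros H. apply rst_step. exact (@ps_contract V S a b u v w H). Qed.

Lemma zig r : forall q0 pre post, r <> [] -> pth (edge S) (q0 :: r) ->
  crst (pre ++ q0 :: r ++ tl (rev (q0 :: r)) ++ post) (pre ++ q0 :: q0 :: post).
Proof.
  induction r as [|q1 r IH]; intros q0 pre post Hne Hp; [congruence|].
  simpl in Hp. destruct Hp as [H01 Hp].
  destruct (classic (r = [])) as [Hr|Hr].
  - subst r. simpl. apply step. apply S_aba. exact H01.
  - assert (E : tl (rev (q0 :: q1 :: r)) = tl (rev (q1 :: r)) ++ [q0]).
    { change (rev (q0 :: q1 :: r)) with (rev (q1 :: r) ++ [q0]).
      apply tl_app. intros Hc. apply (f_equal (@length V)) in Hc. simpl in Hc.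
      rewrite length_app in Hc. simpl in Hc. lia. }
    rewrite E.
    eapply rst_trans.
    + specialize (IH q1 (pre ++ [q0]) (q0 :: post) Hr Hp).
      rewrite <- !app_assoc in IH. simpl in IH.
      replace (pre ++ q0 :: (q1 :: r) ++ (tl (rev (q1 :: r)) ++ [q0]) ++ post)
        with (pre ++ q0 :: q1 :: r ++ tl (rev (q1 :: r)) ++ q0 :: post)
        by (simpl; rewrite <- !app_assoc; reflexivity).
      exact IH.
    + eapply rst_trans.
      * replace (pre ++ q0 :: q1 :: q1 :: q0 :: post) with ((pre ++ [q0]) ++ q1 :: q1 :: q0 :: post)
          by (rewrite <- app_assoc; reflexivity).
        apply step. apply S_aab. apply edge_sym. exact H01.
      * rewrite <- app_assoc. simpl. apply step. apply S_aba. exact H01.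
Qed.

End Cx.

Section Main.
Context (V : Type) (S : list V -> Prop) (HK : is_complex S) (T : V -> V -> Prop)
  (HT : spanning_tree S T) (p : V) (P : V -> list V) (HP0 : P p = [])
  (HPp : forall x, pth T (p :: P x)) (HPl : forall x, last (P x) p = x).

Definition R x := tl (rev (p :: P x)).

Lemma T_edge x y : T x y -> edge S x y.
Proof. destruct HT as (H & _). apply H. Qed.
Lemma T_sym x y : T x y -> T y x.
Proof. destruct HT as (_ & H & _). apply H. Qed.
Lemma T_irr x : ~ T x x.
Proof. destruct HT as (H & _). intros Hx. apply (H x x Hx). reflexivity. Qed.

Lemma pth_mono {R1 R2 : V -> V -> Prop} {s} : (forall x y, R1 x y -> R2 x y) -> pth R1 s -> pth R2 s.
Proof.
  intros Hs. induction s as [|a s IH]; simpl; auto.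
  destruct s as [|b s]; auto. intros [H1 H2]. split; auto.
Qed.

Lemma HPe x : pth (edge S) (p :: P x).
Proof. apply (pth_mono T_edge). apply HPp. Qed.

Lemma RP x : rev (p :: P x) = x :: R x.
Proof.
  unfold R. destruct (last_pre p (P x)) as (pre & E). rewrite E, HPl.
  rewrite rev_app_distr. reflexivity.
Qed.

Lemma R_T x : pth T (x :: R x).
Proof. rewrite <- RP. apply pth_rev; [exact T_sym| apply HPp]. Qed.
Lemma R_e x : pth (edge S) (x :: R x).
Proof. apply (pth_mono T_edge). apply R_T. Qed.

Lemma R_last x : last (x :: R x) p = p.
Proof. rewrite <- RP. simpl. apply last_last. Qed.
Lemma R_last' x d : last (x :: R x) d = p.
Proof. rewrite <- RP. simpl. apply last_last. Qed.

Lemma Rp : R p = [].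
Proof. unfold R. rewrite HP0. reflexivity. Qed.

Lemma P_nil x : P x = [] -> x = p.
Proof. intros H. rewrite <- (HPl x), H. reflexivity. Qed.

Lemma R_nil x : P x <> [] -> R x <> [].
Proof.
  intros H HR. apply H. assert (E := RP x). rewrite HR in E.
  apply (f_equal (@length V)) in E. rewrite length_rev in E. simpl in E.
  destruct (P x); [reflexivity| simpl in E; lia].
Qed.

Lemma tlrevR x : tl (rev (x :: R x)) = P x.
Proof. rewrite <- RP, rev_involutive. reflexivity. Qed.

Lemma split_P x : exists pre, p :: P x = pre ++ [x].
Proof. destruct (last_pre p (P x)) as (pre & E). exists pre. rewrite E, HPl. reflexivity. Qed.

Lemma glue x y pre post : edge S x y ->
  crst S (pre ++ x :: R x ++ P x ++ y :: post) (pre ++ x :: y :: post).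
Proof.
  intros Hxy. destruct (classic (P x = [])) as [H0|H0].
  - assert (x = p) by (apply P_nil; auto). subst x.
    rewrite Rp, HP0. apply rst_refl.
  - eapply rst_trans.
    + pattern (P x) at 1. rewrite <- (tlrevR x). apply (zig HK).
      * apply R_nil; auto.
      * apply R_e.
    + apply (step S pre). apply (S_aab HK). exact Hxy.
Qed.

Lemma pth_app2 (Q : V -> V -> Prop) s1 z s2 : pth Q (s1 ++ [z]) -> pth Q (z :: s2) -> pth Q (s1 ++ z :: s2).
Proof. intros; apply pth_app; auto. Qed.

Definition vl l := pth (edge S) (p :: l) /\ last (p :: l) p = p.

Lemma vl_chain l : vl l -> chain (edge S) p l /\ last l p = p.
Proof. intros [H1 H2]. split; [apply pth_chain; auto| rewrite last_cons in H2; auto]. Qed.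

Definition mk (l : list V) : loop_car S p :=
  match excluded_middle_informative (vl l) with
  | left H => exist _ l (vl_chain H)
  | right _ => loop_one S p
  end.

Lemma mk_val l : vl l -> proj1_sig (mk l) = l.
Proof. intros H. unfold mk. destruct (excluded_middle_informative (vl l)); [reflexivity|contradiction]. Qed.

Lemma vl_of_car (z : loop_car S p) : vl (proj1_sig z).
Proof. destruct z as [l [H1 H2]]. split; cbn [proj1_sig]; [apply pth_chain; auto| rewrite last_cons; auto]. Qed.

Lemma vl_L u v : edge S u v -> vl (P u ++ v :: R v).
Proof.
  intros H. destruct (split_P u) as (pre & E). split.
  - rewrite app_comm_cons. apply pth_app2.
    + rewrite E, <- app_assoc. apply pth_app2; [rewrite <- E; apply HPe | simpl; auto].
    + apply R_e.
  - rewrite app_comm_cons, last_app_gen. apply R_last'.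
Qed.

Lemma vl_lR l : pth (edge S) (p :: l) -> vl (l ++ R (last (p :: l) p)).
Proof.
  intros H. destruct (last_pre p l) as (pre & E). rewrite last_cons.
  split.
  - rewrite app_comm_cons, E, <- app_assoc. simpl. apply pth_app2; [rewrite <- E; auto| apply R_e].
  - rewrite app_comm_cons, E, <- app_assoc. simpl. rewrite last_app_gen. apply R_last'.
Qed.

Lemma vl_app l1 l2 : vl l1 -> vl l2 -> vl (l1 ++ l2).
Proof.
  intros [A1 B1] [A2 B2]. split.
  - rewrite app_comm_cons. destruct (last_pre p l1) as (pre & E).
    rewrite last_cons in B1. rewrite B1 in E.
    rewrite E, <- app_assoc. simpl. apply pth_app2; [rewrite <- E; auto|auto].
  - rewrite app_comm_cons, last_app_gen, B1. rewrite last_cons in B2. auto.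
Qed.

Definition pick (x y : V) : V := epsilon (inhabits x) (fun z => z = x \/ z = y).

Lemma pick_spec x y : pick x y = x \/ pick x y = y.
Proof. unfold pick. apply epsilon_spec. exists x. auto. Qed.

Lemma pick_sym x y : pick x y = pick y x.
Proof.
  unfold pick.
  assert (E : (fun z => z = x \/ z = y) = (fun z => z = y \/ z = x)).
  { apply functional_extensionality. intros z. apply propositional_extensionality. tauto. }
  rewrite E. f_equal. apply proof_irrelevance.
Qed.

Definition opair (x y : V) : V * V :=
  if excluded_middle_informative (pick x y = x) then (x, y) else (y, x).

Lemma opair_sym x y : opair x y = opair y x.
Proof.
  unfold opair. rewrite (pick_sym y x).
  destruct (excluded_middle_informative (pick x y = x)) as [H1|H1];
  destruct (excluded_middle_informative (pick x y = y)) as [H2|H2]; try congruence.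
  destruct (pick_spec x y); congruence.
Qed.

Fixpoint wd (x : V) (l : list V) : fword V :=
  match l with
  | [] => []
  | y :: l' => (false, (x, y)) :: wd y l'
  end.

Lemma wd_app x l1 l2 : wd x (l1 ++ l2) = wd x l1 ++ wd (last l1 x) l2.
Proof.
  revert x; induction l1 as [|y l1 IH]; intros x; [reflexivity|].
  cbn [wd app]. rewrite IH. rewrite last_cons. reflexivity.
Qed.

Lemma wd_valid x l : pth (edge S) (x :: l) -> fvalid S (wd x l).
Proof.
  revert x; induction l as [|y l IH]; intros x H; simpl; [constructor|].
  destruct H as [H1 H2]. constructor; [exact H1| apply IH; exact H2].
Qed.

Definition mkword (w : fword V) : fl_car S :=
  match excluded_middle_informative (fvalid S w) with
  | left H => exist _ w H
  | right _ => fl_one S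
  end.

Lemma mkword_val w : fvalid S w -> proj1_sig (mkword w) = w.
Proof. intros H. unfold mkword. destruct (excluded_middle_informative (fvalid S w)); [reflexivity|contradiction]. Qed.

Definition aE (x y : V) : floating_group S := mkword [(false, opair x y)].
Definition jE (z : edge_path_group S p) : floating_group S := mkword (wd p (proj1_sig z)).

Lemma aE_sym x y : T x y -> geq (floating_group S) (aE x y) (aE y x).
Proof. intros _. unfold aE. rewrite opair_sym. apply fe_refl. Qed.

Definition Wd (s : list V) : fword V := match s with [] => [] | x :: l => wd x l end.

Lemma Wd_app s1 z s2 : Wd (s1 ++ z :: s2) = Wd (s1 ++ [z]) ++ Wd (z :: s2).
Proof.
  destruct s1 as [|x s1]; [reflexivity|]. simpl. rewrite wd_app.
  rewrite (wd_app x s1 [z]). cbn [wd]. rewrite <- app_assoc. reflexivity.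
Qed.

Lemma Wd_crst s1 s2 : crst S s1 s2 -> fl_eqv S (Wd s1) (Wd s2).
Proof.
  induction 1 as [s1 s2 Hs| s | s1 s2 _ IH | s1 s2 s3 _ IH1 _ IH2].
  - destruct Hs as [a b u v w Huvw]. cbn [app].
    rewrite (Wd_app a u (v :: w :: b)), (Wd_app a u (w :: b)). apply fe_app; [apply fe_refl|].
    cbn [Wd wd].
    change ((false, (u, v)) :: (false, (v, w)) :: wd w b) with ([(false, (u, v)); (false, (v, w))] ++ wd w b).
    change ((false, (u, w)) :: wd w b) with ([(false, (u, w))] ++ wd w b).
    apply fe_app; [|apply fe_refl]. apply fe_sym. apply fe_rel. exact Huvw.
  - apply fe_refl.
  - apply fe_sym; auto.
  - eapply fe_trans; eauto.
Qed.

Lemma jE_hom : is_hom (edge_path_group S p) (floating_group S) jE.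
Proof.
  split; [|split].
  - intros z1 z2 H. cbn [geq edge_path_group floating_group] in H |- *. unfold loop_eqv in H. unfold jE.
    rewrite !mkword_val by (apply wd_valid; apply (vl_of_car _)).
    apply (Wd_crst H).
  - intros z1 z2. cbn [geq gmul edge_path_group floating_group]. unfold jE.
    rewrite (mkword_val (wd_valid _ _ (proj1 (vl_of_car (loop_mul z1 z2))))).
    unfold fl_mul. cbn [proj1_sig].
    rewrite (mkword_val (wd_valid _ _ (proj1 (vl_of_car z1)))).
    rewrite (mkword_val (wd_valid _ _ (proj1 (vl_of_car z2)))).
    destruct z1 as [l1 [A1 B1]], z2 as [l2 [A2 B2]]. cbn [loop_mul proj1_sig].
    rewrite wd_app, B1. apply fe_refl.
  - cbn [geq gone edge_path_group floating_group]. unfold jE.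
    rewrite mkword_val; [apply fe_refl|]. constructor.
Qed.

Section WithG.
Context (X : grp) (HX : IsGroup X) (g : edge_path_group S p -> X)
  (Hg : is_hom (edge_path_group S p) X g).
Let mA := @mulA X HX. Let m1l := @mul1l X HX. Let m1r := @mul1r X HX.
Let mV := @mulV X HX. Let Vm := @Vmul X HX. Let mKV := @mulKV X HX. Let mVK := @mulVK X HX.
Let EqX := @geq_Equiv X HX. Let PrX := @gmul_Proper X HX. Let PrI := @ginv_Proper X HX.
Existing Instance EqX. Existing Instance PrX. Existing Instance PrI.
Local Notation "a * b" := (gmul X a b).
Local Notation "a == b" := (geq X a b) (at level 70).
Local Notation "1" := (gone X).

Lemma g_eq l1 l2 : vl l1 -> vl l2 -> crst S (p :: l1) (p :: l2) -> g (mk l1) == g (mk l2).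
Proof.
  intros H1 H2 H. destruct Hg as (Hg1 & _). apply Hg1. simpl. unfold loop_eqv.
  rewrite !mk_val; auto.
Qed.

Lemma g_z (z : loop_car S p) : g z == g (mk (proj1_sig z)).
Proof.
  destruct Hg as (Hg1 & _). apply Hg1. simpl. unfold loop_eqv.
  rewrite mk_val by apply vl_of_car. apply rst_refl.
Qed.

Lemma g_app l1 l2 : vl l1 -> vl l2 -> g (mk (l1 ++ l2)) == g (mk l1) * g (mk l2).
Proof.
  intros H1 H2. destruct Hg as (Hg1 & Hg2 & _). rewrite <- Hg2. apply Hg1.
  simpl. unfold loop_eqv. rewrite !mk_val; auto; [apply rst_refl|]. apply vl_app; auto.
Qed.

Lemma g_nil : g (mk []) == 1.
Proof.
  destruct Hg as (Hg1 & _ & Hg3). rewrite <- Hg3. apply Hg1. simpl. unfold loop_eqv.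
  rewrite mk_val; [apply rst_refl|]. split; simpl; auto.
Qed.

Lemma vl_p : vl [p].
Proof. split; simpl; auto. split; auto. apply (S_refl HK). Qed.

Lemma g_pp : g (mk [p]) == 1.
Proof.
  apply (@idem1 X HX). rewrite <- g_app by apply vl_p.
  apply g_eq.
  - split; simpl; auto. split; [apply (S_refl HK)|]. split; auto. apply (S_refl HK).
  - apply vl_p.
  - apply (step S [] p p p []). apply (S_aab HK). apply (S_refl HK).
Qed.

Definition psi u v := g (mk (P u ++ v :: R v)).

Lemma lemmaC l : pth (edge S) (p :: l) -> g (mk (l ++ R (last (p :: l) p))) == prodS psi (p :: l).
Proof.
  induction l as [|y l IH] using rev_ind; intros H.
  - simpl. rewrite Rp. apply g_nil.
  - destruct (last_pre p l) as (pre & E). set (x := last l p) in E.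
    assert (E2 : p :: l ++ [y] = pre ++ x :: [y]) by (rewrite app_comm_cons, E, <- app_assoc; reflexivity).
    assert (Hl : pth (edge S) (p :: l)).
    { rewrite E2 in H. rewrite E. apply pth_app in H. tauto. }
    assert (Hxy : edge S x y).
    { rewrite E2 in H. apply pth_app in H. simpl in H. tauto. }
    assert (Ly : last (p :: l ++ [y]) p = y) by (rewrite app_comm_cons, last_app_gen; reflexivity).
    rewrite Ly, E2. rewrite (prodS_app HX). rewrite <- E. rewrite last_cons in IH. fold x in IH.
    rewrite <- IH by auto.
    simpl prodS. rewrite m1r. 
    unfold psi. rewrite <- g_app.
    2:{ generalize (vl_lR _ Hl). rewrite last_cons. auto. }
    2:{ apply vl_L; auto. }
    apply g_eq.
    + generalize (vl_lR _ H). rewrite Ly. auto.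
    + apply vl_app; [|apply vl_L; auto]. generalize (vl_lR _ Hl). rewrite last_cons. auto.
    + apply rst_sym.
      assert (Hs : forall rest, p :: l ++ rest = pre ++ x :: rest)
        by (intros rest; rewrite app_comm_cons, E, <- app_assoc; reflexivity).
      rewrite <- !app_assoc, !Hs. simpl. apply glue. auto.
Qed.

Lemma T_cyc : ~ (exists x l, NoDup (x :: l) /\ 2 <= length l /\ chain T x l /\ T (last l x) x).
Proof. destruct HT as (_ & _ & _ & H). exact H. Qed.

Lemma cw (psi' : V -> V -> X) (Hinv : forall u v, T u v -> psi' u v * psi' v u == 1) x m :
  pth T (x :: m) -> last (x :: m) x = x -> prodS psi' (x :: m) == 1.
Proof.
  intros Hp Hl. destruct (last_pre x m) as (pre & E). rewrite last_cons in Hl. rewrite Hl in E.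
  destruct pre as [|x' s].
  - simpl in E. inversion E; subst. simpl. reflexivity.
  - simpl in E. injection E as <- E'. subst m.
    apply (@closed_walk_trivial V X HX psi' T T_irr T_cyc Hinv (length s)); auto.
Qed.

Lemma Hs_P x : exists pre, forall rest, p :: P x ++ rest = pre ++ x :: rest.
Proof.
  destruct (split_P x) as (pre & E). exists pre. intros rest.
  rewrite app_comm_cons, E, <- app_assoc. reflexivity.
Qed.

Lemma psi_inv u v : edge S u v -> psi u v * psi v u == 1.
Proof.
  intros Huv. unfold psi. rewrite <- g_app by (apply vl_L; auto using edge_sym).
  rewrite <- g_pp. apply g_eq.
  - apply vl_app; apply vl_L; auto. apply (edge_sym HK); auto.
  - apply vl_p.
  - destruct (Hs_P u) as (pre & Hs).
    rewrite <- app_assoc. simpl app. rewrite Hs.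
    eapply rst_trans.
    { replace (pre ++ u :: v :: R v ++ P v ++ u :: R u) with ((pre ++ [u]) ++ v :: R v ++ P v ++ u :: R u)
        by (rewrite <- app_assoc; reflexivity).
      apply glue. apply (edge_sym HK); auto. }
    rewrite <- app_assoc. simpl app.
    eapply rst_trans.
    { apply (step S pre u v u). apply (S_aba HK). auto. }
    destruct (classic (P u = [])) as [H0|H0].
    + assert (u = p) by (apply P_nil; auto). subst u. rewrite Rp.
      specialize (Hs []). rewrite H0 in Hs. simpl in Hs.
      destruct pre as [|a pre]; [apply rst_refl|].
      simpl in Hs. injection Hs as _ Hs'. destruct pre; discriminate.
    + destruct (R u) as [|c R'] eqn:ER; [exfalso; apply (R_nil H0); auto|].
      eapply rst_trans.
      { apply (step S pre u u c R'). apply (S_aab HK).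
        generalize (R_e u). rewrite ER. simpl. tauto. }
      rewrite <- Hs. rewrite <- ER.
      generalize (zig HK (r := P u) p [] [] H0 (HPe u)). simpl app.
      rewrite app_nil_r. unfold R. auto.
Qed.

Lemma psi_mul x y z : S [x; y; z] -> psi x y * psi y z == psi x z.
Proof.
  intros Hxyz. unfold psi.
  assert (Hxy := S_xy_of_xyz HK _ _ _ Hxyz). assert (Hyz := S_yz_of_xyz HK _ _ _ Hxyz).
  assert (Hxz := S_xz_of_xyz HK _ _ _ Hxyz).
  rewrite <- g_app by (apply vl_L; auto).
  apply g_eq.
  - apply vl_app; apply vl_L; auto.
  - apply vl_L; auto.
  - destruct (Hs_P x) as (pre & Hs).
    rewrite <- app_assoc. simpl app. rewrite !Hs.
    eapply rst_trans.
    { replace (pre ++ x :: y :: R y ++ P y ++ z :: R z) with ((pre ++ [x]) ++ y :: R y ++ P y ++ z :: R z)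
        by (rewrite <- app_assoc; reflexivity).
      apply glue. auto. }
    rewrite <- app_assoc. simpl app.
    apply (step S pre x y z). auto.
Qed.

Lemma psi_T1 u v : T u v -> psi u v == 1.
Proof.
  intros Huv. unfold psi.
  assert (Hv := vl_L (T_edge Huv)). destruct Hv as [Hv1 Hv2].
  generalize (lemmaC _ Hv1). rewrite Hv2, Rp, app_nil_r. intros ->.
  apply cw.
  - intros a b Hab. apply psi_inv. apply T_edge; auto.
  - rewrite app_comm_cons. apply pth_app2.
    + destruct (split_P u) as (pre & E). rewrite E, <- app_assoc. apply pth_app2.
      * rewrite <- E. apply HPp.
      * simpl. auto.
    + apply R_T.
  - exact Hv2.
Qed.

Section WithF.
Context (f : V -> V -> X) (Hf : forall x y, T x y -> f x y == f y x).

Definition phi u v := if excluded_middle_informative (pick u v = u) then f u v else ginv X (f v u).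

Lemma phi_l u v : pick u v = u -> phi u v = f u v.
Proof. unfold phi. destruct (excluded_middle_informative (pick u v = u)); congruence. Qed.
Lemma phi_r u v : pick u v <> u -> phi u v = ginv X (f v u).
Proof. unfold phi. destruct (excluded_middle_informative (pick u v = u)); congruence. Qed.

Lemma phi_inv u v : T u v -> phi u v * phi v u == 1.
Proof.
  intros Huv. assert (Hne : u <> v) by (intros ->; apply (T_irr Huv)).
  destruct (pick_spec u v) as [H|H].
  - rewrite (@phi_l u v H), phi_r by (rewrite pick_sym; congruence). apply mV.
  - rewrite (@phi_r u v) by congruence. rewrite phi_l by (rewrite pick_sym; auto). apply Vm.
Qed.

Definition tau x := prodS phi (p :: P x).

Lemma pthP (Q : V -> V -> Prop) (HQ : forall a b, T a b -> Q a b) x rest :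
  pth Q (x :: rest) -> pth Q (p :: P x ++ rest).
Proof.
  intros H. destruct (Hs_P x) as (pre & Hs). rewrite Hs.
  apply pth_app2; auto. rewrite <- Hs. rewrite app_nil_r. apply (pth_mono HQ). apply HPp.
Qed.

Lemma prodS_P (psi' : V -> V -> X) x rest :
  prodS psi' (p :: P x ++ rest) == prodS psi' (p :: P x) * prodS psi' (x :: rest).
Proof.
  destruct (Hs_P x) as (pre & Hs). rewrite Hs. rewrite (prodS_app HX).
  rewrite <- Hs, app_nil_r. reflexivity.
Qed.

Lemma Rinv x : prodS phi (x :: R x) == ginv X (tau x).
Proof.
  apply (@inv_uniq X HX). unfold tau. rewrite <- prodS_P. apply cw.
  - apply phi_inv.
  - apply pthP; auto. apply R_T.
  - rewrite app_comm_cons, last_app_gen, last_cons, HPl, <- (last_cons x x (R x)). apply R_last'.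
Qed.

Lemma tau_step x y : T x y -> tau y == tau x * phi x y.
Proof.
  intros Hxy. symmetry. apply (@eq_of_mulV X HX). rewrite <- Rinv.
  assert (H1 : prodS phi (p :: P x ++ y :: R y) == 1).
  { apply cw.
    - apply phi_inv.
    - apply pthP; auto. simpl. split; auto. apply R_T.
    - rewrite app_comm_cons, last_app_gen. apply R_last'. }
  rewrite prodS_P in H1. rewrite <- H1. fold (tau x). simpl prodS at 2.
  destruct (R y) as [|c r]; simpl prodS; rewrite ?m1r, ?mA; reflexivity.
Qed.

Definition hl0 x y := ginv X (tau x) * (psi x y * tau y).

Lemma hl0_T x y : T x y -> hl0 x y == phi x y.
Proof.
  intros Hxy. unfold hl0. rewrite psi_T1 by auto. rewrite m1l, (tau_step Hxy). apply mVK.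
Qed.

Definition hl (a : bool * (V * V)) : X :=
  let '(b, (x, y)) := a in if b then ginv X (hl0 x y) else hl0 x y.

Definition hw (w : fword V) : X := fold_right (fun a r => hl a * r) 1 w.

Lemma hw_app w1 w2 : hw (w1 ++ w2) == hw w1 * hw w2.
Proof.
  induction w1 as [|a w1 IH]; simpl.
  - rewrite m1l. reflexivity.
  - rewrite IH, mA. reflexivity.
Qed.

Lemma hw_eqv w1 w2 : fl_eqv S w1 w2 -> hw w1 == hw w2.
Proof.
  induction 1 as [w|w w' _ IH|w1 w2 w3 _ IH1 _ IH2|a b c d _ IH1 _ IH2|b [x y]|x y z Hxyz].
  - reflexivity.
  - symmetry; auto.
  - rewrite IH1; auto.
  - rewrite !hw_app, IH1, IH2. reflexivity.
  - destruct b; simpl; rewrite m1r; [apply Vm|apply mV].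
  - simpl. rewrite !m1r. unfold hl0.
    rewrite <- (psi_mul Hxyz).
    rewrite !mA. rewrite mKV. reflexivity.
Qed.

Definition Hc (z : floating_group S) : X := hw (proj1_sig z).

Lemma Hc_hom : is_hom (floating_group S) X Hc.
Proof.
  split; [|split].
  - intros z1 z2 H. apply hw_eqv. exact H.
  - intros z1 z2. unfold Hc. cbn [gmul floating_group]. unfold fl_mul. cbn [proj1_sig]. apply hw_app.
  - reflexivity.
Qed.

Lemma edge_opair x y : T x y -> edge S (fst (opair x y)) (snd (opair x y)).
Proof.
  intros H. unfold opair. destruct (excluded_middle_informative (pick x y = x)); simpl;
  [|apply (edge_sym HK)]; apply T_edge; auto.
Qed.

Lemma Hc_a x y : T x y -> Hc (aE x y) == f x y.
Proof.
  intros Hxy. unfold Hc, aE. rewrite mkword_val by (constructor; [apply edge_opair; auto| constructor]).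
  simpl. rewrite m1r. unfold opair.
  destruct (excluded_middle_informative (pick x y = x)) as [H|H].
  - rewrite hl0_T by auto. rewrite phi_l; auto. reflexivity.
  - rewrite hl0_T by (apply T_sym; auto). rewrite phi_l.
    + symmetry. apply Hf. auto.
    + rewrite pick_sym. destruct (pick_spec x y); congruence.
Qed.

Lemma tele x l : hw (wd x l) == ginv X (tau x) * (prodS psi (x :: l) * tau (last l x)).
Proof.
  revert x; induction l as [|y l IH]; intros x.
  - simpl. rewrite m1l. symmetry. apply Vm.
  - cbn [wd hw fold_right]. fold (hw (wd y l)). rewrite IH. cbn [hl].
    rewrite last_cons. unfold hl0.
    change (prodS psi (x :: y :: l)) with (psi x y * prodS psi (y :: l)).
    rewrite !mA. rewrite mKV. reflexivity.
Qed.

Lemma tau_p : tau p == 1.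
Proof. unfold tau. rewrite HP0. reflexivity. Qed.

Lemma Hc_j z : Hc (jE z) == g z.
Proof.
  unfold Hc, jE. rewrite mkword_val by (apply wd_valid; apply (vl_of_car z)).
  rewrite tele. destruct (vl_of_car z) as [A B]. rewrite last_cons in B. rewrite B.
  rewrite tau_p, (@inv1 X HX), m1l, m1r.
  rewrite <- (lemmaC _ A). rewrite last_cons, B, Rp, app_nil_r. symmetry. apply g_z.
Qed.

Section Char.
Context (h : floating_group S -> X) (Hh : is_hom (floating_group S) X h)
  (Ha : forall x y, T x y -> h (aE x y) == f x y) (Hj : forall z, h (jE z) == g z).

Lemma h_eqv w1 w2 : fvalid S w1 -> fvalid S w2 -> fl_eqv S w1 w2 -> h (mkword w1) == h (mkword w2).
Proof.
  intros H1 H2 H. destruct Hh as (Hh1 & _). apply Hh1. cbn [geq floating_group].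
  rewrite !mkword_val; auto.
Qed.

Lemma fvalid_app w1 w2 : fvalid S w1 -> fvalid S w2 -> fvalid S (w1 ++ w2).
Proof. intros; apply Forall_app; auto. Qed.

Lemma h_app w1 w2 : fvalid S w1 -> fvalid S w2 -> h (mkword (w1 ++ w2)) == h (mkword w1) * h (mkword w2).
Proof.
  intros H1 H2. destruct Hh as (Hh1 & Hh2 & _). rewrite <- Hh2. apply Hh1.
  cbn [geq gmul floating_group]. unfold fl_mul. cbn [proj1_sig].
  rewrite !mkword_val; auto using fvalid_app. apply fe_refl.
Qed.

Lemma h_nil : h (mkword []) == 1.
Proof.
  destruct Hh as (Hh1 & _ & Hh3). rewrite <- Hh3. apply Hh1. cbn [geq floating_group].
  rewrite mkword_val; [apply fe_refl| constructor].
Qed.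

Lemma h_z z : h z == h (mkword (proj1_sig z)).
Proof.
  destruct Hh as (Hh1 & _). apply Hh1. cbn [geq floating_group].
  rewrite mkword_val; [apply fe_refl| apply (proj2_sig z)].
Qed.

Lemma fv1 b x y : edge S x y -> fvalid S [(b, (x, y))].
Proof. intros H. constructor; [exact H| constructor]. Qed.

Lemma h_uu u : h (mkword [(false, (u, u))]) == 1.
Proof.
  apply (@idem1 X HX). rewrite <- h_app by (apply fv1; apply (S_refl HK)).
  apply h_eqv; try (constructor; [apply (S_refl HK)|]; try constructor; try apply (S_refl HK); constructor).
  apply fe_sym. apply fe_rel. apply (S_aab HK). apply (S_refl HK).
Qed.

Lemma h_inv u v : edge S u v -> h (mkword [(false, (u, v))]) * h (mkword [(false, (v, u))]) == 1.
Proof.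
  intros Huv. rewrite <- h_app by (apply fv1; auto; apply (edge_sym HK); auto).
  rewrite <- (h_uu u). apply h_eqv.
  - constructor; [auto|constructor; [apply (edge_sym HK); auto|constructor]].
  - apply fv1. apply (S_refl HK).
  - apply fe_sym. apply fe_rel. apply (S_aba HK). auto.
Qed.

Lemma h_T u v : T u v -> h (mkword [(false, (u, v))]) == phi u v.
Proof.
  intros Huv. assert (Ha' := Ha Huv). unfold aE, opair in Ha'.
  destruct (excluded_middle_informative (pick u v = u)) as [H|H].
  - rewrite (@phi_l u v H). exact Ha'.
  - rewrite (@phi_r u v H). rewrite <- (Hf Huv), <- Ha'.
    apply (@inv_uniq X HX). apply h_inv. apply (edge_sym HK). apply T_edge; auto.
Qed.

Lemma h_walk x l : pth T (x :: l) -> h (mkword (wd x l)) == prodS phi (x :: l).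
Proof.
  revert x; induction l as [|y l IH]; intros x H.
  - simpl. apply h_nil.
  - destruct H as [H1 H2]. cbn [wd]. change ((false, (x, y)) :: wd y l) with ([(false, (x, y))] ++ wd y l).
    rewrite h_app.
    + rewrite h_T, IH by auto. reflexivity.
    + apply fv1. apply T_edge; auto.
    + apply wd_valid. apply (pth_mono T_edge). auto.
Qed.

Lemma h_letter x y : edge S x y -> h (mkword [(false, (x, y))]) == hl0 x y.
Proof.
  intros Hxy. assert (HL := vl_L Hxy).
  assert (E1 := Hj (mk (P x ++ y :: R y))). unfold jE in E1. rewrite mk_val in E1 by auto.
  unfold hl0, psi. rewrite <- E1. rewrite wd_app, HPl. cbn [wd].
  change ((false, (x, y)) :: wd y (R y)) with ([(false, (x, y))] ++ wd y (R y)).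
  assert (V1 : fvalid S (wd p (P x))) by (apply wd_valid; apply HPe).
  assert (V2 : fvalid S (wd y (R y))) by (apply wd_valid; apply R_e).
  rewrite h_app by auto using fvalid_app, fv1. rewrite h_app by auto using fv1.
  rewrite (h_walk _ _ (HPp x)), (h_walk _ _ (R_T y)), Rinv. fold (tau x).
  rewrite !mA, mVK, Vm, m1r. reflexivity.
Qed.

Lemma h_word w : fvalid S w -> h (mkword w) == hw w.
Proof.
  induction w as [|[b [x y]] w IH]; intros H.
  - apply h_nil.
  - inversion H as [|? ? Hxy Hw]; subst. simpl in Hxy.
    change ((b, (x, y)) :: w) with ([(b, (x, y))] ++ w). rewrite h_app by auto using fv1.
    rewrite IH by auto. rewrite hw_app.
    apply (@gmul_Proper X HX); [|reflexivity].
    cbn [hw fold_right hl]. rewrite m1r. destruct b.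
    + rewrite <- (h_letter Hxy). apply (@inv_uniq X HX).
      rewrite <- h_app by auto using fv1. rewrite <- h_nil. apply h_eqv; auto using fv1.
      * constructor; [auto|constructor; [auto|constructor]].
      * constructor.
      * apply (fe_cancel S false (x, y)).
    + apply h_letter; auto.
Qed.

Lemma charac z : h z == Hc z.
Proof. rewrite h_z. apply h_word. apply (proj2_sig z). Qed.
End Char.

End WithF.

End WithG.

End Main.

Lemma P_exists (V : Type) (S : list V -> Prop) (T : V -> V -> Prop) (p : V) :
  spanning_tree S T ->
  exists P : V -> list V, P p = [] /\ (forall x, pth T (p :: P x)) /\ (forall x, last (P x) p = x).
Proof.
  intros (_ & _ & Hc & _).
  exists (fun x => if excluded_middle_informative (x = p) then []
           else proj1_sig (constructive_indefinite_description _ (Hc p x))).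
  split; [|split].
  - destruct (excluded_middle_informative (p = p)); [reflexivity|congruence].
  - intros x. destruct (excluded_middle_informative (x = p)); [simpl; auto|].
    destruct (constructive_indefinite_description _ (Hc p x)) as [l [H1 H2]]. simpl.
    apply pth_chain. auto.
  - intros x. destruct (excluded_middle_informative (x = p)) as [->|]; [reflexivity|].
    destruct (constructive_indefinite_description _ (Hc p x)) as [l [H1 H2]]. simpl. auto.
Qed.

Theorem proposition6p3 (V : Type) (S : list V -> Prop) (T : V -> V -> Prop) (p : V) :
  is_complex S -> connected S -> spanning_tree S T ->
  is_free_prod_on_edges T (floating_group S) (edge_path_group S p).
Proof.
  intros HK _ HT.
  destruct (@P_exists V S T p HT) as (P & HP0 & HPp & HPl).
  exists (aE S), (@jE V S p). split; [|split].
  - apply aE_sym.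
  - apply jE_hom.
  - intros X HXg f g Hf Hg.
    assert (HX : IsGroup X) by (constructor; exact HXg).
    split.
    + exists (@Hc V S p P X g f). split; [|split].
      * eapply Hc_hom; eauto.
      * intros x y Hxy. eapply Hc_a; eauto.
      * intros z. eapply Hc_j; eauto.
    + intros h1 h2 Hh1 Hh2 Ha1 Hj1 Ha2 Hj2 w.
      rewrite (charac HK HT P HPp HPl HX g f Hf Hh1 Ha1 Hj1 w).
      rewrite (charac HK HT P HPp HPl HX g f Hf Hh2 Ha2 Hj2 w).
      reflexivity.
Qed.
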